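(* Consider the model below with $M=M_f=N=1$ and $\epsilon_2\ge0$, and let $\bar{\epsilon}_{REE}\in[-\infty,\infty)$ be the number such that a rational expectations equilibrium (REE) exists if and only if $\epsilon_1\ge\bar{\epsilon}_{REE}$. If $\epsilon_1>\bar{\epsilon}_{REE}$, then (i) at most one E-stable REE exists, and (ii) any E-stable REE is of type PP or of type ZP.
   Context: Parameters: $0<\beta<1$, $\sigma,\lambda,\mu>0$, $\psi>1$, $p,q\in(0,1]$. The shock $\epsilon_t$ is a two-state Markov chain on $\{\epsilon_1,\epsilon_2\}$ with transition matrix $K=\begin{pmatrix}p&1-p\\1-q&q\end{pmatrix}$. Model: $x_t=E_t x_{t+1}-\sigma(i_t-E_t\pi_{t+1})+\epsilon_t$, $\pi_t=\lambda x_t+\beta E_t\pi_{t+1}$, $i_t=\max\{\psi\pi_t,-\mu\}$. An REE is a pair $Y_j=(x_j,\pi_j)$, $j=1,2$, with, for $j=1,2$ and $i_j=\max\{\psi\pi_j,-\mu\}$: $x_j=x^e_j-\sigma(i_j-\pi^e_j)+\epsilon_j$, $\pi_j=\lambda x_j+\beta\pi^e_j$, where $(x^e_1,\pi^e_1)=pY_1+(1-p)Y_2$, $(x^e_2,\pi^e_2)=(1-q)Y_1+qY_2$. Types: the ZLB binds in state $j$ if $\psi\pi_j\le-\mu$; type PP (binds in no state), ZP (binds in state 1 only), PZ (binds in state 2 only), ZZ (binds in both). Let $A_P=\frac{1}{1+\lambda\sigma\psi}\begin{pmatrix}1&\sigma-\beta\sigma\psi\\ \lambda&\beta+\lambda\sigma\end{pmatrix}$,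 $A_Z=\begin{pmatrix}1&\sigma\\ \lambda&\beta+\lambda\sigma\end{pmatrix}$, and $I$ the $4\times4$ identity. Define $DT^{PP}=K\otimes A_P-I$, $DT^{ZZ}=K\otimes A_Z-I$, $DT^{ZP}=\begin{pmatrix}pA_Z&(1-p)A_Z\\(1-q)A_P&qA_P\end{pmatrix}-I$, $DT^{PZ}=\begin{pmatrix}pA_P&(1-p)A_P\\(1-q)A_Z&qA_Z\end{pmatrix}-I$. An REE of type $i$ is E-stable if all eigenvalues of $DT^i$ have negative real parts. *)

(* Defs.v *)
From HB Require Import structures.
From mathcomp Require Import all_boot all_order all_algebra.
From mathcomp Require Import complex.
From mathcomp Require Import constructive_ereal reals.
Set Implicit Arguments. Unset Strict Implicit. Unset Printing Implicit Defensive.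
Import Order.TTheory GRing.Theory Num.Theory.
Local Open Scope ring_scope.

Section Model.
Variable R : realType.

Definition irate (mu psi pi : R) : R := Num.max (psi * pi) (- mu).

Definition is_REE (beta sigma lambda mu psi p q e1 e2 : R)
    (x1 pi1 x2 pi2 : R) : Prop :=
  let xe1 := p * x1 + (1 - p) * x2 in
  let pie1 := p * pi1 + (1 - p) * pi2 in
  let xe2 := (1 - q) * x1 + q * x2 in
  let pie2 := (1 - q) * pi1 + q * pi2 in
  [/\ x1 = xe1 - sigma * (irate mu psi pi1 - pie1) + e1,
      pi1 = lambda * x1 + beta * pie1,
      x2 = xe2 - sigma * (irate mu psi pi2 - pie2) + e2 &
      pi2 = lambda * x2 + beta * pie2].

Definition REE_exists (beta sigma lambda mu psi p q e1 e2 : R) : Prop :=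
  exists x1 pi1 x2 pi2, is_REE beta sigma lambda mu psi p q e1 e2 x1 pi1 x2 pi2.

Inductive ree_type := PP | ZP | PZ | ZZ.

Definition binds (mu psi pi : R) : bool := psi * pi <= - mu.

Definition type_of (mu psi pi1 pi2 : R) : ree_type :=
  match binds mu psi pi1, binds mu psi pi2 with
  | false, false => PP
  | true, false => ZP
  | false, true => PZ
  | true, true => ZZ
  end.

Definition A_P (beta sigma lambda psi : R) : 'M[R]_2 :=
  (1 + lambda * sigma * psi)^-1 *:
    \matrix_(i < 2, j < 2)
      (if (i == 0 :> nat) then (if (j == 0 :> nat) then 1 else sigma - beta * sigma * psi)
       else (if (j == 0 :> nat) then lambda else beta + lambda * sigma)).

Definition A_Z (beta sigma lambda : R) : 'M[R]_2 :=
  \matrix_(i < 2, j < 2)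
    (if (i == 0 :> nat) then (if (j == 0 :> nat) then 1 else sigma)
     else (if (j == 0 :> nat) then lambda else beta + lambda * sigma)).

Definition A_of (beta sigma lambda psi : R) (zlb : bool) : 'M[R]_2 :=
  if zlb then A_Z beta sigma lambda else A_P beta sigma lambda psi.

(* DT^i = ( p A1 (1-p) A1 ; (1-q) A2  q A2 ) - I, with A_j = A_Z if the ZLB
   binds in state j under type i and A_P otherwise; for i = PP, ZZ this is
   exactly K (x) A_P - I, K (x) A_Z - I. *)
Definition DT (beta sigma lambda psi p q : R) (t : ree_type) : 'M[R]_(2 + 2) :=
  let: (z1, z2) := match t with
                   | PP => (false, false) | ZP => (true, false)
                   | PZ => (false, true) | ZZ => (true, true) end in
  let A1 := A_of beta sigma lambda psi z1 in
  let A2 := A_of beta sigma lambda psi z2 in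
  block_mx (p *: A1) ((1 - p) *: A1) ((1 - q) *: A2) (q *: A2) - 1%:M.

Definition stable_mx (n : nat) (M : 'M[R]_n) : Prop :=
  forall z : R[i], eigenvalue (map_mx (fun x : R => x%:C%C) M) z ->
    complex.Re z < 0.

Definition Estable_REE (beta sigma lambda mu psi p q e1 e2 : R)
    (x1 pi1 x2 pi2 : R) : Prop :=
  is_REE beta sigma lambda mu psi p q e1 e2 x1 pi1 x2 pi2 /\
  stable_mx (DT beta sigma lambda psi p q (type_of mu psi pi1 pi2)).

End Model.

(* Main.v *)
Require Import Defs.
From HB Require Import structures.
From mathcomp Require Import all_boot all_order all_algebra.
From mathcomp Require Import complex constructive_ereal reals polyrcf.
From mathcomp Require Import ring lra.
Set Implicit Arguments. Unset Strict Implicit.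
Import Order.TTheory GRing.Theory Num.Theory.
Local Open Scope ring_scope.

Section L.
Variable R : realType.

Lemma unstable_eig (M : 'M[R]_4) (u : 'cV[R]_4) r :
  0 <= r -> u != 0 -> M *m u = r *: u -> ~ stable_mx M.
Proof.
move=> r0 u0 Mu St.
have hd : \det (r%:M - M) == 0.
  rewrite -det_tr; apply/det0P; exists u^T; first by rewrite trmx_eq0.
  by rewrite -trmx_mul mulmxBl mul_scalar_mx Mu subrr trmx0.
have ev : eigenvalue M r.
  apply/eigenvalueP; have [v v0 vM] := det0P hd; exists v => //.
  by move/eqP: vM; rewrite mulmxBr mul_mx_scalar subr_eq0 eq_sym => /eqP.
have := St r%:C%C.
rewrite (eigenvalue_map (real_complex R)) => /(_ ev) /=.
by rewrite ltNge r0.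
Qed.

Lemma poly_root_ge1 (P : {poly R}) : 0 < lead_coef P -> P.[1] <= 0 ->
  exists2 s, 1 <= s & root P s.
Proof.
move=> lc P1.
have [n Hn] := poly_pinfty_gt_lc lc.
have hb : 1 <= Num.max 1 n by rewrite le_max lexx.
have Pb : 0 <= P.[Num.max 1 n].
  apply: le_trans (ltW lc) (Hn _ _); by rewrite le_max lexx orbT.
have [|x /andP [x1 _] rx] := poly_ivt hb (_ : P.[1] <= 0 <= P.[Num.max 1 n]); first by rewrite P1 Pb.
by exists x.
Qed.

Lemma seq_root_ge1 (s : seq R) : 0 < last 0 s -> horner_rec s 1 <= 0 ->
  exists2 x, 1 <= x & horner_rec s x = 0.
Proof.
move=> ls h1.
have PK : Poly s = s :> seq R by apply: (@PolyK _ 0); rewrite gt_eqF.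
have lc : 0 < lead_coef (Poly s).
  by rewrite lead_coefE PK nth_last.
have P1 : (Poly s).[1] <= 0 by rewrite horner_Poly.
have [x x1 /rootP rx] := @poly_root_ge1 (Poly s) lc P1.
by exists x => //; rewrite -horner_Poly.
Qed.

Lemma quartic_root (a11 a22 b11 b12 b21 b22 c11 c12 c21 c22 : R) :
  0 < a11 -> 0 < a22 ->
  (a11 + b11 + c11) * (a22 + b22 + c22) - (b12 + c12) * (b21 + c21) <= 0 ->
  exists2 s, 1 <= s &
   (a11 * s ^+ 2 + b11 * s + c11) * (a22 * s ^+ 2 + b22 * s + c22)
     - (b12 * s + c12) * (b21 * s + c21) = 0.
Proof.
move=> h1 h2 hF.
have := @seq_root_ge1 [:: c11 * c22 - c12 * c21;
   b11 * c22 + c11 * b22 - b12 * c21 - c12 * b21;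
   a11 * c22 + b11 * b22 + c11 * a22 - b12 * b21;
   a11 * b22 + b11 * a22; a11 * a22].
case.
- by rewrite /= mulr_gt0.
- by rewrite /=; move: hF; apply: le_trans; rewrite le_eqVlt; apply/orP; left; apply/eqP; ring.
move=> x x1 hx; exists x => //; rewrite -hx /=; ring.
Qed.

Variables (b s l psi p q : R).
Definition cz (z : bool) := if z then 0 else psi.
Definition TT := 1 + b + l * s.
Definition w11 z1 S := (1 + l * s * cz z1) * S ^+ 2 + (- (TT * p)) * S + b * (p ^+ 2 + (1 - p) * (1 - q)).
Definition w12 S := (- (TT * (1 - p))) * S + b * (p * (1 - p) + (1 - p) * q).
Definition w21 S := (- (TT * (1 - q))) * S + b * ((1 - q) * p + q * (1 - q)).
Definition w22 z2 S := (1 + l * s * cz z2) * S ^+ 2 + (- (TT * q)) * S + b * ((1 - q) * (1 - p) + q ^+ 2).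

Definition DTz (z1 z2 : bool) : 'M[R]_(2 + 2) :=
  block_mx (p *: A_of b s l psi z1) ((1 - p) *: A_of b s l psi z1)
           ((1 - q) *: A_of b s l psi z2) (q *: A_of b s l psi z2) - 1%:M.

Definition c2 (x y : R) : 'cV[R]_2 := \col_(i < 2) (if i == 0 :> nat then x else y).

Ltac try_k k H :=
  match type of H with ?W = 0 =>
  match goal with |- ?L = ?Rr =>
    let E := fresh "E" in
    have E : L - Rr = k * W;
      [ rewrite /w11 /w12 /w21 /w22 /cz /TT; field; by repeat (apply/andP; split); assumption
      | by apply/eqP; rewrite -subr_eq0 E H mulr0 ]
  end end.

Lemma eig_W (z1 z2 : bool) (S pi1 pi2 : R) :
  0 < l -> 0 < s -> 0 < psi -> 0 < S ->
  w11 z1 S * pi1 + w12 S * pi2 = 0 -> w21 S * pi1 + w22 z2 S * pi2 = 0 ->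
  let x1 := (S * pi1 - b * (p * pi1 + (1 - p) * pi2)) / (l * S) in
  let x2 := (S * pi2 - b * ((1 - q) * pi1 + q * pi2)) / (l * S) in
  DTz z1 z2 *m col_mx (c2 x1 pi1) (c2 x2 pi2) = (S - 1) *: col_mx (c2 x1 pi1) (c2 x2 pi2).
Proof.
move=> l0 s0 psi0 S0 H1 H2 x1 x2.
have hl : l != 0 by rewrite gt_eqF.
have hS : S != 0 by rewrite gt_eqF.
have hd : 1 + l * s * psi != 0 by rewrite gt_eqF // addr_gt0 // !mulr_gt0.
rewrite /DTz mulmxBl mul1mx mul_block_col -!scalemxAl scale_col_mx opp_col_mx add_col_mx.
congr col_mx; apply/colP => i; rewrite !mxE !(big_ord_recl 1) !big_ord1 /c2 !mxE /=;
case: i => [[|[|//]]] ? /=; case: z1 z2 H1 H2 => [] [] H1 H2; rewrite /A_of /A_P /A_Z !mxE /=;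
  rewrite /x1 /x2;
  first [ try_k (- (l * S * (1 + l * s * psi))^-1) H1
        | try_k (- (l * S * (1 + l * s * psi))^-1) H2
        | try_k (- (S * (1 + l * s * psi))^-1) H1
        | try_k (- (S * (1 + l * s * psi))^-1) H2
        | try_k (- (l * S)^-1) H1
        | try_k (- (l * S)^-1) H2
        | try_k (- S^-1) H1
        | try_k (- S^-1) H2 ].
Qed.



Lemma ker2 (a11 a12 a21 a22 : R) : a11 * a22 - a12 * a21 = 0 ->
  exists pi1 pi2 : R, [/\ (pi1 != 0) || (pi2 != 0),
     a11 * pi1 + a12 * pi2 = 0 & a21 * pi1 + a22 * pi2 = 0].
Proof.
move=> H.
have [h|h] := boolP ((a12 != 0) || (a11 != 0)).
  exists a12, (- a11); split.
  - by rewrite oppr_eq0.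
  - ring.
  - have -> : a21 * a12 + a22 * - a11 = - (a11 * a22 - a12 * a21) by ring.
    by rewrite H oppr0.
move: h; rewrite negb_or !negbK => /andP [/eqP h12 /eqP h11].
have [h|h] := boolP ((a22 != 0) || (a21 != 0)).
  exists a22, (- a21); split.
  - by rewrite oppr_eq0.
  - rewrite h11 h12; ring.
  - ring.
move: h; rewrite negb_or !negbK => /andP [/eqP h22 /eqP h21].
exists 1, 0; split.
- by rewrite oner_eq0.
- rewrite h11 h12; ring.
- rewrite h21 h22; ring.
Qed.

Definition gam := (1 - b * (p + q - 1)) / l.
Definition m11 z1 := gam * (1 - p) - s * p + s * cz z1.
Definition m12 := - ((gam + s) * (1 - p)).
Definition m21 := - ((gam + s) * (1 - q)).
Definition m22 z2 := gam * (1 - q) - s * q + s * cz z2.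
Definition detM z1 z2 := m11 z1 * m22 z2 - m12 * m21.

Lemma c2_neq0 x y : y != 0 -> c2 x y != 0.
Proof.
move=> hy; apply/eqP => /colP /(_ (@Ordinal 2 1 isT)); rewrite !mxE /=.
by move/eqP: hy.
Qed.

Lemma colc2_neq0 x1 y1 x2 y2 : (y1 != 0) || (y2 != 0) ->
  (col_mx (c2 x1 y1) (c2 x2 y2) : 'cV[R]_4) != 0.
Proof.
move=> h; change (col_mx (c2 x1 y1) (c2 x2 y2) != (0 : 'cV[R]_(2+2))).
rewrite col_mx_eq0 negb_and.
by case/orP: h => h; [apply/orP; left | apply/orP; right]; apply: c2_neq0.
Qed.

Lemma F1 z1 z2 : 0 < l -> 0 < s -> 0 < psi ->
  detM z1 z2 <= 0 -> ~ stable_mx (DTz z1 z2).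
Proof.
move=> l0 s0 psi0 hdet.
have cz0 z : 0 <= cz z by rewrite /cz; case: z => //; exact: ltW.
have a0 z : 0 < 1 + l * s * cz z.
  by rewrite ltr_pwDl // mulr_ge0 // mulr_ge0 // ltW.
have [|S S1 hS] := @quartic_root (1 + l * s * cz z1) (1 + l * s * cz z2)
  (- (TT * p)) (- (TT * (1 - p))) (- (TT * (1 - q))) (- (TT * q))
  (b * (p ^+ 2 + (1 - p) * (1 - q))) (b * (p * (1 - p) + (1 - p) * q))
  (b * ((1 - q) * p + q * (1 - q))) (b * ((1 - q) * (1 - p) + q ^+ 2)) (a0 z1) (a0 z2).
  have hl : l != 0 by rewrite gt_eqF.
  rewrite (_ : _ - _ = l ^+ 2 * detM z1 z2).
    by rewrite mulr_ge0_le0 // sqr_ge0.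
  rewrite /detM /m11 /m12 /m21 /m22 /gam /TT; field.
  by rewrite hl.
have hS' : w11 z1 S * w22 z2 S - w12 S * w21 S = 0 by exact: hS.
have [pi1 [pi2 [hnz H1 H2]]] := ker2 hS'.
have S0 : 0 < S by apply: lt_le_trans S1.
have := eig_W l0 s0 psi0 S0 H1 H2 => /= E.
apply: (unstable_eig _ _ E); first by rewrite subr_ge0.
exact: colc2_neq0.
Qed.

Lemma ZZ_unstable : 0 < l -> 0 < s -> 0 < psi -> ~ stable_mx (DTz true true).
Proof.
move=> l0 s0 psi0.
have [||S S1 hS] := @seq_root_ge1 [:: b; - TT; 1].
- by rewrite /= ltr01.
- have -> : horner_rec [:: b; - TT; 1] 1 = - (l * s) by rewrite /= /TT; ring.
  by rewrite oppr_le0 ltW // mulr_gt0.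
have S0 : 0 < S by apply: lt_le_trans S1.
have hq : S ^+ 2 - TT * S + b = 0 by rewrite -hS /=; ring.
have H1 : w11 true S * 1 + w12 S * 1 = 0 by rewrite -hq /w11 /w12 /cz; ring.
have H2 : w21 S * 1 + w22 true S * 1 = 0 by rewrite -hq /w21 /w22 /cz; ring.
have := eig_W l0 s0 psi0 S0 H1 H2 => /= E.
apply: (unstable_eig _ _ E); first by rewrite subr_ge0.
by apply: colc2_neq0; rewrite oner_eq0.
Qed.


Lemma irateE mu pi : irate mu psi pi = cz (binds mu psi pi) * pi - (if binds mu psi pi then mu else 0).
Proof. by rewrite /irate /binds /cz maxEle; case: ifP => _; ring. Qed.

Lemma ree_eqs mu e1 e2 x1 pi1 x2 pi2 : 0 < l ->
  is_REE b s l mu psi p q e1 e2 x1 pi1 x2 pi2 ->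
  [/\ x1 = (pi1 - b * (p * pi1 + (1 - p) * pi2)) / l,
      x2 = (pi2 - b * ((1 - q) * pi1 + q * pi2)) / l,
      e1 = m11 (binds mu psi pi1) * pi1 + m12 * pi2 - (if binds mu psi pi1 then s * mu else 0) &
      e2 = m21 * pi1 + m22 (binds mu psi pi2) * pi2 - (if binds mu psi pi2 then s * mu else 0)].
Proof.
move=> l0; rewrite /is_REE /= => -[h1 h2 h3 h4].
have hl : l != 0 by rewrite gt_eqF.
have hx1 : x1 = (pi1 - b * (p * pi1 + (1 - p) * pi2)) / l.
  by rewrite {1}h2; field; rewrite hl.
have hx2 : x2 = (pi2 - b * ((1 - q) * pi1 + q * pi2)) / l.
  by rewrite {1}h4; field; rewrite hl.
have he1 : e1 = x1 - (p * x1 + (1 - p) * x2) + s * (irate mu psi pi1 - (p * pi1 + (1 - p) * pi2)).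
  by rewrite {1}h1; ring.
have he2 : e2 = x2 - ((1 - q) * x1 + q * x2) + s * (irate mu psi pi2 - ((1 - q) * pi1 + q * pi2)).
  by rewrite {1}h3; ring.
split => //.
  rewrite he1 hx1 hx2 irateE /m11 /m12 /gam /cz; case: (binds mu psi pi1); field; by rewrite hl.
rewrite he2 hx1 hx2 irateE /m22 /m21 /gam /cz; case: (binds mu psi pi2); field; by rewrite hl.
Qed.

Lemma DT_type mu pi1 pi2 :
  DT b s l psi p q (type_of mu psi pi1 pi2) = DTz (binds mu psi pi1) (binds mu psi pi2).
Proof. by rewrite /type_of /DT /DTz; case: (binds mu psi pi1); case: (binds mu psi pi2). Qed.


Lemma gam_gt0 : 0 < l -> 0 < b -> b < 1 -> 0 < p -> p <= 1 -> 0 < q -> q <= 1 -> 0 < gam.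
Proof.
move=> l0 b0 b1 p0 p1 q0 q1; rewrite /gam divr_gt0 //.
have : b * (p + q - 1) <= b * 1 by apply: ler_wpM2l; [exact: ltW | lra].
rewrite mulr1 => h; lra.
Qed.

Lemma part2 mu e1 e2 x1 pi1 x2 pi2 :
  0 < l -> 0 < s -> 1 < psi -> 0 < mu -> 0 < b -> b < 1 -> 0 < p -> p <= 1 -> 0 < q -> q <= 1 ->
  0 <= e2 ->
  is_REE b s l mu psi p q e1 e2 x1 pi1 x2 pi2 ->
  stable_mx (DTz (binds mu psi pi1) (binds mu psi pi2)) ->
  binds mu psi pi2 = false.
Proof.
move=> l0 s0 psi1 mu0 b0 b1 p0 p1 q0 q1 e20 hree hst.
have psi0 : 0 < psi by lra.
have g0 := gam_gt0 l0 b0 b1 p0 p1 q0 q1.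
have [_ _ _ he2] := ree_eqs l0 hree.
case B2: (binds mu psi pi2) hst he2 => // hst he2.
case B1: (binds mu psi pi1) hst => hst.
  by case: (ZZ_unstable l0 s0 psi0 hst).
exfalso; apply: (F1 l0 s0 psi0 _ hst).
move: B1 B2; rewrite /binds => /negbT; rewrite -ltNge => B1 B2.
have hp12 : pi2 < pi1.
  have : psi * pi2 < psi * pi1 by apply: le_lt_trans B1.
  by rewrite ltr_pM2l.
have hp1 : - mu < pi1.
  case: (lerP 0 pi1) => h; first lra.
  nra.
have hm22 : m22 true < 0.
  rewrite /m22 /cz mulr0 addr0.
  rewrite ltNge; apply/negP => hc.
  have id : m21 * pi1 + m22 true * pi2 = - ((gam + s) * (1 - q)) * (pi1 - pi2) - s * pi2.
    by rewrite /m21 /m22 /cz; ring.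
  move: he2; rewrite id /= => he2.
  have : s <= (gam + s) * (1 - q) by lra.
  nra.
have hm11 : 0 < m11 false.
  rewrite /m11 /cz.
  have : 0 <= gam * (1 - p) by apply: mulr_ge0; [exact: ltW | lra].
  have : s * p < s * psi by rewrite ltr_pM2l //; lra.
  lra.
have hm12 : 0 <= m12 * m21.
  rewrite /m12 /m21 mulrNN mulrACA; apply: mulr_ge0.
    by apply: mulr_ge0; apply: ltW; rewrite addr_gt0.
  apply: mulr_ge0; lra.
rewrite /detM; nra.
Qed.


Lemma same_type mu e1 e2 x1 pi1 x2 pi2 y1 rho1 y2 rho2 :
  0 < l -> 0 < s -> 0 < psi ->
  is_REE b s l mu psi p q e1 e2 x1 pi1 x2 pi2 ->
  is_REE b s l mu psi p q e1 e2 y1 rho1 y2 rho2 ->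
  binds mu psi pi1 = binds mu psi rho1 -> binds mu psi pi2 = binds mu psi rho2 ->
  stable_mx (DTz (binds mu psi pi1) (binds mu psi pi2)) ->
  [/\ x1 = y1, pi1 = rho1, x2 = y2 & pi2 = rho2].
Proof.
move=> l0 s0 psi0 hY hY' B1 B2 hst.
have [hx1 hx2 he1 he2] := ree_eqs l0 hY.
have [hy1 hy2 he1' he2'] := ree_eqs l0 hY'.
rewrite -B1 in he1'; rewrite -B2 in he2'.
move: he1 he2 he1' he2' hst.
move: (binds mu psi pi1) (binds mu psi pi2) => z1 z2 he1 he2 he1' he2' hst.
have hdet : detM z1 z2 != 0.
  by rewrite gt_eqF //; rewrite ltNge; apply/negP => h; exact: F1 l0 s0 psi0 h hst.
have E1 : m11 z1 * (pi1 - rho1) + m12 * (pi2 - rho2) = 0.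
  by rewrite -(subrr e1) {1}he1 he1'; ring.
have E2 : m21 * (pi1 - rho1) + m22 z2 * (pi2 - rho2) = 0.
  by rewrite -(subrr e2) {1}he2 he2'; ring.
have D1 : detM z1 z2 * (pi1 - rho1) =
   m22 z2 * (m11 z1 * (pi1 - rho1) + m12 * (pi2 - rho2))
   - m12 * (m21 * (pi1 - rho1) + m22 z2 * (pi2 - rho2)) by rewrite /detM; ring.
have D2 : detM z1 z2 * (pi2 - rho2) =
   m11 z1 * (m21 * (pi1 - rho1) + m22 z2 * (pi2 - rho2))
   - m21 * (m11 z1 * (pi1 - rho1) + m12 * (pi2 - rho2)) by rewrite /detM; ring.
rewrite E1 E2 !mulr0 subrr in D1 D2.
move/eqP: D1; rewrite mulf_eq0 (negbTE hdet) subr_eq0 /= => /eqP P1.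
move/eqP: D2; rewrite mulf_eq0 (negbTE hdet) subr_eq0 /= => /eqP P2.
by split => //; rewrite ?hx1 ?hy1 ?hx2 ?hy2 P1 P2.
Qed.


Lemma PPZP mu e1 e2 x1 pi1 x2 pi2 y1 rho1 y2 rho2 :
  0 < l -> 0 < s -> 1 < psi -> 0 < mu -> 0 < b -> b < 1 -> 0 < p -> p <= 1 -> 0 < q -> q <= 1 ->
  is_REE b s l mu psi p q e1 e2 x1 pi1 x2 pi2 ->
  is_REE b s l mu psi p q e1 e2 y1 rho1 y2 rho2 ->
  binds mu psi pi1 = false -> binds mu psi pi2 = false ->
  binds mu psi rho1 = true -> binds mu psi rho2 = false ->
  ~ stable_mx (DTz true false).
Proof.
move=> l0 s0 psi1 mu0 b0 b1 p0 p1 q0 q1 hY hY' B1 B2 B1' B2'.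
have psi0 : 0 < psi by lra.
have g0 := gam_gt0 l0 b0 b1 p0 p1 q0 q1.
have [_ _ he1 he2] := ree_eqs l0 hY.
have [_ _ he1' he2'] := ree_eqs l0 hY'.
rewrite B1 B2 in he1 he2; rewrite B1' B2' in he1' he2'.
apply: (F1 l0 s0 psi0).
have E1 : m11 true * (pi1 - rho1) + m12 * (pi2 - rho2) = - (s * (psi * pi1 + mu)).
  have -> : m11 true * (pi1 - rho1) + m12 * (pi2 - rho2) = - (s * (psi * pi1 + mu)) +
     ((m11 false * pi1 + m12 * pi2 - (if false then s * mu else 0)) -
      (m11 true * rho1 + m12 * rho2 - (if true then s * mu else 0))).
    by rewrite /m11 /cz /=; ring.
  by rewrite -he1 -he1' subrr addr0.
have E2 : m21 * (pi1 - rho1) + m22 false * (pi2 - rho2) = 0.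
  by rewrite -(subrr e2) {1}he2 he2'; ring.
have D1 : detM true false * (pi1 - rho1) =
   m22 false * (m11 true * (pi1 - rho1) + m12 * (pi2 - rho2))
   - m12 * (m21 * (pi1 - rho1) + m22 false * (pi2 - rho2)) by rewrite /detM; ring.
rewrite E1 E2 mulr0 subr0 in D1.
move: B1 B1'; rewrite /binds => /negbT; rewrite -ltNge => B1 B1'.
have hd : 0 < pi1 - rho1.
  rewrite subr_gt0 -(ltr_pM2l psi0); exact: le_lt_trans B1' B1.
have hm22 : 0 < m22 false.
  rewrite /m22 /cz.
  have : 0 <= gam * (1 - q) by apply: mulr_ge0; [exact: ltW | lra].
  have : s * q < s * psi by rewrite ltr_pM2l //; lra.
  lra.
have ht : 0 < s * (psi * pi1 + mu) by rewrite mulr_gt0 //; lra.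
rewrite leNgt; apply/negP => hpos.
have : 0 < detM true false * (pi1 - rho1) by rewrite mulr_gt0.
rewrite D1; nra.
Qed.

End L.

Unset Implicit Arguments. Set Strict Implicit.

Theorem proposition7 (R : realType) (beta sigma lambda mu psi p q e1 e2 : R)
  (ebar : \bar R) :
  0 < beta -> beta < 1 -> 0 < sigma -> 0 < lambda -> 0 < mu -> 1 < psi ->
  0 < p -> p <= 1 -> 0 < q -> q <= 1 -> 0 <= e2 ->
  (* ebar = epsilon_REE in [-oo, oo): an REE exists iff e1' >= ebar *)
  (ebar != +oo)%E ->
  (forall e1' : R,
     REE_exists beta sigma lambda mu psi p q e1' e2 <-> (ebar <= e1'%:E)%E) ->
  (ebar < e1%:E)%E ->
  (* (i) at most one E-stable REE *)
  (forall x1 pi1 x2 pi2 y1 rho1 y2 rho2 : R,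
     Estable_REE beta sigma lambda mu psi p q e1 e2 x1 pi1 x2 pi2 ->
     Estable_REE beta sigma lambda mu psi p q e1 e2 y1 rho1 y2 rho2 ->
     [/\ x1 = y1, pi1 = rho1, x2 = y2 & pi2 = rho2]) /\
  (* (ii) any E-stable REE is of type PP or ZP *)
  (forall x1 pi1 x2 pi2 : R,
     Estable_REE beta sigma lambda mu psi p q e1 e2 x1 pi1 x2 pi2 ->
     type_of mu psi pi1 pi2 = PP \/ type_of mu psi pi1 pi2 = ZP).
Proof.
move=> b0 b1 s0 l0 mu0 psi1 p0 p1 q0 q1 e20 _ _ _.
have psi0 : 0 < psi by apply: lt_trans psi1.
have P2 : forall x1 pi1 x2 pi2,
    Estable_REE beta sigma lambda mu psi p q e1 e2 x1 pi1 x2 pi2 ->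
    binds mu psi pi2 = false.
  move=> x1 pi1 x2 pi2 [hY hst]; rewrite DT_type in hst.
  exact: (part2 l0 s0 psi1 mu0 b0 b1 p0 p1 q0 q1 e20 hY hst).
split.
  move=> x1 pi1 x2 pi2 y1 rho1 y2 rho2 HY HY'.
  have B2 := P2 _ _ _ _ HY; have B2' := P2 _ _ _ _ HY'.
  case: HY => hY hst; case: HY' => hY' hst'; rewrite DT_type in hst; rewrite DT_type in hst'.
  case B1: (binds mu psi pi1); case B1': (binds mu psi rho1).
  - by apply: (same_type l0 s0 psi0 hY hY' _ _ hst); rewrite ?B1 ?B1' ?B2 ?B2'.
  - rewrite B1 B2 in hst.
    by case: (PPZP l0 s0 psi1 mu0 b0 b1 p0 p1 q0 q1 hY' hY B1' B2' B1 B2 hst).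
  - rewrite B1' B2' in hst'.
    by case: (PPZP l0 s0 psi1 mu0 b0 b1 p0 p1 q0 q1 hY hY' B1 B2 B1' B2' hst').
  - by apply: (same_type l0 s0 psi0 hY hY' _ _ hst); rewrite ?B1 ?B1' ?B2 ?B2'.
move=> x1 pi1 x2 pi2 HY; have B2 := P2 _ _ _ _ HY.
rewrite /type_of B2; case: (binds mu psi pi1); [right | left] => //.
Qed.
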